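(* Let $A\in\mathbb{R}^{d\times d}$ be invertible, $\bm{b}\in\mathbb{R}^d$, $\bm{x}_0\in\mathbb{R}^d$, $\Sigma_0$ symmetric positive-definite, and write $\langle\bm{u},\bm{v}\rangle_{A\Sigma_0A^\top}=\bm{u}^\top A\Sigma_0A^\top\bm{v}$ with associated norm $\|\cdot\|_{A\Sigma_0A^\top}$. Define recursively: $\bm{r}_0=\bm{b}-A\bm{x}_0$, $\tilde{\bm{s}}_1=\bm{r}_0$, $\bm{s}_1=\tilde{\bm{s}}_1/\|\tilde{\bm{s}}_1\|_{A\Sigma_0A^\top}$; for $k\ge1$, with $S_k=[\bm{s}_1,\dots,\bm{s}_k]$ and $\Lambda_k=S_k^\top A\Sigma_0A^\top S_k$, set $\bm{x}_k=\bm{x}_0+\Sigma_0A^\top S_k\Lambda_k^{-1}S_k^\top\bm{r}_0$, $\bm{r}_k=\bm{b}-A\bm{x}_k$, $\tilde{\bm{s}}_{k+1}=\bm{r}_k-\langle\bm{s}_k,\bm{r}_k\rangle_{A\Sigma_0A^\top}\bm{s}_k$, and, assuming $\tilde{\bm{s}}_{k+1}\neq\bm{0}$, $\bm{s}_{k+1}=\tilde{\bm{s}}_{k+1}/\|\tilde{\bm{s}}_{k+1}\|_{A\Sigma_0A^\top}$. Then for each $m$ such that $\tilde{\bm{s}}_1,\dots,\tilde{\bm{s}}_m\neq\bm{0}$, the set $\{\bm{s}_i\}_{i=1}^m$ is $A\Sigma_0A^\top$-orthonormal, and consequently $\Lambda_m=I$ (so in particular the recursion is well defined).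
   Context: $\bm{x}_k$ is the posterior mean of $\bm{x}$ under the prior $\mathcal{N}(\bm{x}_0,\Sigma_0)$ conditioned on $S_k^\top A\bm{x}=S_k^\top\bm{b}$. A set $\{\bm{s}_i\}$ is $A\Sigma_0A^\top$-orthonormal if $\langle\bm{s}_i,\bm{s}_j\rangle_{A\Sigma_0A^\top}=\delta_{ij}$. *)

(* Defs.v *)
From mathcomp Require Import all_boot all_order all_algebra.
From mathcomp Require Import reals.
Set Implicit Arguments. Unset Strict Implicit. Unset Printing Implicit Defensive.
Import Order.TTheory GRing.Theory Num.Theory.
Local Open Scope ring_scope.

Section BayesCG.
Variables (R : realType) (d : nat).
Variables (A Sigma0 : 'M[R]_d) (b x0 : 'cV[R]_d).

Definition Mw : 'M[R]_d := A *m Sigma0 *m A^T.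

Definition ipw (u v : 'cV[R]_d) : R := (u^T *m Mw *m v) 0 0.
Definition nrmw (u : 'cV[R]_d) : R := Num.sqrt (ipw u u).

(* normalization u / ||u|| (0 if u = 0, by convention 0^-1 = 0) *)
Definition normalize (u : 'cV[R]_d) : 'cV[R]_d := (nrmw u)^-1 *: u.

(* S_k = [s_1, ..., s_k] built from the list ss = [:: s_1; ...; s_k] *)
Definition Smat (k : nat) (ss : seq 'cV[R]_d) : 'M[R]_(d, k) :=
  \matrix_(i < d, j < k) (nth 0 ss j) i 0.

Definition Lam (k : nat) (ss : seq 'cV[R]_d) : 'M[R]_k :=
  (Smat k ss)^T *m Mw *m Smat k ss.

Definition r0 : 'cV[R]_d := b - A *m x0.

Definition xk (k : nat) (ss : seq 'cV[R]_d) : 'cV[R]_d :=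
  x0 + Sigma0 *m A^T *m Smat k ss *m invmx (Lam k ss) *m (Smat k ss)^T *m r0.

Definition rk (k : nat) (ss : seq 'cV[R]_d) : 'cV[R]_d := b - A *m xk k ss.

(* stilde_{k+1} computed from ss = [:: s_1; ...; s_k]:
   stilde_1 = r0, stilde_{k+1} = r_k - <s_k, r_k> s_k for k >= 1 *)
Definition stilde_next (k : nat) (ss : seq 'cV[R]_d) : 'cV[R]_d :=
  if k is 0 then r0
  else let r := rk k ss in let sk := nth 0 ss k.-1 in r - ipw sk r *: sk.

(* sseq n = [:: s_1; ...; s_n] *)
Fixpoint sseq (n : nat) : seq 'cV[R]_d :=
  if n is n'.+1 then rcons (sseq n') (normalize (stilde_next n' (sseq n')))
  else [::].

Definition stilde (i : nat) : 'cV[R]_d := stilde_next i.-1 (sseq i.-1).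
Definition s (i : nat) : 'cV[R]_d := nth 0 (sseq i) i.-1.

End BayesCG.

(* Main.v *)
Require Import Defs.
From mathcomp Require Import all_boot all_order all_algebra.
From mathcomp Require Import reals.
Import Order.TTheory GRing.Theory Num.Theory.
Local Open Scope ring_scope.
Set Implicit Arguments. Unset Strict Implicit.

Section Proof7.
Variables (R : realType) (d : nat) (A Sigma0 : 'M[R]_d) (b x0 : 'cV[R]_d).
Hypothesis HA : A \in unitmx.
Hypothesis HS : Sigma0^T = Sigma0.
Hypothesis Hpos : forall v : 'cV[R]_d, v != 0 -> 0 < (v^T *m Sigma0 *m v) 0 0.

Definition dot (u v : 'cV[R]_d) : R := (u^T *m v) 0 0.
Local Notation M := (Mw A Sigma0).
Local Notation ip := (ipw A Sigma0).

Lemma tr11 (X : 'M[R]_1) : X 0 0 = X^T 0 0.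
Proof. by rewrite mxE. Qed.
Lemma dotC u v : dot u v = dot v u.
Proof. by rewrite /dot tr11 trmx_mul trmxK. Qed.
Lemma dotDr u v w : dot u (v + w) = dot u v + dot u w.
Proof. by rewrite /dot mulmxDr mxE. Qed.
Lemma dotZr u a v : dot u (a *: v) = a * dot u v.
Proof. by rewrite /dot -scalemxAr mxE. Qed.
Lemma dotNr u v : dot u (- v) = - dot u v.
Proof. by rewrite /dot mulmxN mxE. Qed.
Lemma dotBr u v w : dot u (v - w) = dot u v - dot u w.
Proof. by rewrite dotDr dotNr. Qed.
Lemma dot0r u : dot u 0 = 0.
Proof. by rewrite /dot mulmx0 mxE. Qed.
Lemma dotDl u v w : dot (v + w) u = dot v u + dot w u.
Proof. by rewrite dotC dotDr !(dotC u). Qed.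
Lemma dotZl u a v : dot (a *: v) u = a * dot v u.
Proof. by rewrite dotC dotZr dotC. Qed.
Lemma dotBl u v w : dot (v - w) u = dot v u - dot w u.
Proof. by rewrite dotC dotBr !(dotC u). Qed.
Lemma dot0l u : dot 0 u = 0.
Proof. by rewrite dotC dot0r. Qed.

Lemma MT : M^T = M.
Proof. by rewrite /Mw !trmx_mul trmxK HS mulmxA. Qed.

Lemma ipE u v : ip u v = dot u (M *m v).
Proof. by rewrite /ipw /dot mulmxA. Qed.
Lemma ipE' u v : ip u v = dot (M *m u) v.
Proof. by rewrite /ipw /dot trmx_mul MT. Qed.
Lemma ipC u v : ip u v = ip v u.
Proof. by rewrite ipE ipE' dotC. Qed.
Lemma ipDr u v w : ip u (v + w) = ip u v + ip u w.
Proof. by rewrite !ipE mulmxDr dotDr. Qed.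
Lemma ipZr u a v : ip u (a *: v) = a * ip u v.
Proof. by rewrite !ipE -scalemxAr dotZr. Qed.
Lemma ipBr u v w : ip u (v - w) = ip u v - ip u w.
Proof. by rewrite !ipE mulmxBr dotBr. Qed.
Lemma ipZl u a v : ip (a *: v) u = a * ip v u.
Proof. by rewrite ipC ipZr ipC. Qed.
Lemma ip0r u : ip u 0 = 0.
Proof. by rewrite ipE mulmx0 dot0r. Qed.
Lemma ip0l u : ip 0 u = 0.
Proof. by rewrite ipC ip0r. Qed.

Lemma ip_gt0 u : u != 0 -> 0 < ip u u.
Proof.
move=> nz; have : A^T *m u != 0.
  apply: contra nz => /eqP H.
  have HAT : A^T \in unitmx by rewrite unitmx_tr.
  by rewrite -(mulKmx HAT u) H mulmx0.
move/Hpos; congr (_ < _).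
by rewrite /ipw /Mw trmx_mul trmxK !mulmxA.
Qed.

Lemma ip_ge0 u : 0 <= ip u u.
Proof. by have [->|/ip_gt0/ltW //] := eqVneq u 0; rewrite ip0r. Qed.

Lemma dot_eq0 u : dot u u = 0 -> u = 0.
Proof.
rewrite /dot mxE => H; apply/matrixP => i j; rewrite ord1 mxE.
have H0 : forall k, 0 <= u^T 0 k * u k 0 by move=> k; rewrite mxE -expr2 sqr_ge0.
have := psumr_eq0P (fun k _ => H0 k) H (i:=i) isT.
by rewrite !mxE => /eqP; rewrite mulf_eq0 orbb => /eqP.
Qed.


Local Notation ss n := (sseq A Sigma0 b x0 n).
Local Notation sv i := (s A Sigma0 b x0 i).
Local Notation st i := (stilde A Sigma0 b x0 i).

Lemma size_sseq n : size (ss n) = n.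
Proof. by elim: n => //= n IH; rewrite size_rcons IH. Qed.

Lemma sS k : sv k.+1 = normalize A Sigma0 (st k.+1).
Proof. by rewrite /s /= nth_rcons size_sseq ltnn eqxx. Qed.

Lemma sv0 : sv 0 = 0.
Proof. by []. Qed.

Lemma nth_sseq n i : (i < n)%N -> nth 0 (ss n) i = sv i.+1.
Proof.
elim: n => // n IH lt; rewrite /= nth_rcons size_sseq.
rewrite ltnS leq_eqVlt in lt; case/orP: lt => [/eqP->|lti]; last by rewrite lti IH.
by rewrite /s /= nth_rcons size_sseq ltnn eqxx.
Qed.

Lemma col_Smat k (l : seq 'cV[R]_d) a : col a (Smat k l) = nth 0 l a.
Proof. by apply/matrixP => i j; rewrite !mxE ord1. Qed.

Lemma Smul k (l : seq 'cV[R]_d) (v : 'cV[R]_k) :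
  Smat k l *m v = \sum_(a < k) v a 0 *: nth 0 l a.
Proof.
apply/matrixP => i j; rewrite !mxE summxE ord1; apply: eq_bigr => a _.
by rewrite !mxE mulrC.
Qed.

Lemma StE k (l : seq 'cV[R]_d) r a : ((Smat k l)^T *m r) a 0 = dot (nth 0 l a) r.
Proof. by rewrite /dot !mxE; apply: eq_bigr => i _; rewrite !mxE. Qed.

Lemma LamE k (l : seq 'cV[R]_d) a c : Lam A Sigma0 k l a c = ip (nth 0 l a) (nth 0 l c).
Proof.
rewrite /Lam /ipw !mxE; apply: eq_bigr => i _; rewrite !mxE; congr (_ * _).
by apply: eq_bigr => p _; rewrite !mxE.
Qed.

Definition ON k := forall i j : nat, (1 <= i <= k)%N -> (1 <= j <= k)%N ->
  ip (sv i) (sv j) = (i == j)%:R.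

Lemma Lam1 k : ON k -> Lam A Sigma0 k (ss k) = 1%:M.
Proof.
move=> H; apply/matrixP => a c; rewrite LamE !nth_sseq // H ?ltn_ord //.
by rewrite !mxE eqSS.
Qed.

Fixpoint rr k := if k is k'.+1 then rr k' - dot (sv k) (r0 A b x0) *: (M *m sv k)
  else r0 A b x0.

Lemma rr_sum k : rr k = r0 A b x0 - M *m \sum_(l < k) dot (sv l.+1) (r0 A b x0) *: sv l.+1.
Proof.
elim: k => [|k IH] /=; first by rewrite big_ord0 mulmx0 subr0.
by rewrite IH big_ord_recr /= mulmxDr opprD addrA scalemxAr.
Qed.

Lemma rk_rr k : ON k -> rk A Sigma0 b x0 k (ss k) = rr k.
Proof.
move=> H; rewrite rr_sum /rk /xk Lam1 // invmx1 mulmx1.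
rewrite mulmxDr opprD addrA /r0; congr (_ - _).
rewrite !mulmxA /Mw -!mulmxA Smul; do 3 congr (_ *m _).
by apply: eq_bigr => a _; rewrite StE nth_sseq.
Qed.

Lemma ON_le k k' : (k' <= k)%N -> ON k -> ON k'.
Proof.
move=> le H i j /andP[i1 ik] /andP[j1 jk]; apply: H.
  by rewrite i1 (leq_trans ik le).
by rewrite j1 (leq_trans jk le).
Qed.

Lemma dot_s_rr k i j : ON k -> (1 <= j <= k)%N -> (i <= k)%N ->
  dot (sv j) (rr i) = dot (sv j) (r0 A b x0) - (j <= i)%:R * dot (sv j) (r0 A b x0).
Proof.
move=> H jk; elim: i => [|i IH] ik /=.
  by case/andP: jk; rewrite leqn0 => /lt0n_neq0/negbTE -> _; rewrite mul0r subr0.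
rewrite dotBr dotZr IH ?(ltnW ik) // -ipE H //.
case: (ltngtP j i.+1) => [lt|gt|->].
- by rewrite -ltnS lt mul1r mulr0 subr0.
- by rewrite (leqNgt j i) ltnW // mul0r mulr0 !subr0.
- by rewrite ltnn mul0r subr0 mulr1 mul1r.
Qed.

Lemma Q k j : ON k -> (j <= k)%N -> dot (sv j) (rr k) = 0.
Proof.
move=> H jk; case: j jk => [|j] jk; first by rewrite sv0 dot0l.
by rewrite (@dot_s_rr k k j.+1 H) // jk mul1r subrr.
Qed.

Lemma Qprev k j : ON k -> (j < k)%N -> dot (sv j.+1) (rr j) = dot (sv j.+1) (r0 A b x0).
Proof.
move=> H jk; rewrite (@dot_s_rr k j j.+1 H) ?ltnn ?mul0r ?subr0 //; exact: ltnW.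
Qed.

Lemma st_rr k : ON k -> st k.+1 = rr k - ip (sv k) (rr k) *: sv k.
Proof.
move=> H; case: k H => [|k] H.
  by rewrite sv0 scaler0 subr0.
by rewrite /stilde /= rk_rr.
Qed.

Lemma nrm_gt0 u : u != 0 -> 0 < nrmw A Sigma0 u.
Proof. by move=> nz; rewrite /nrmw sqrtr_gt0 ip_gt0. Qed.

Lemma st_eq k : st k.+1 != 0 -> st k.+1 = nrmw A Sigma0 (st k.+1) *: sv k.+1.
Proof.
move=> nz; rewrite sS /normalize scalerA mulfV ?scale1r //.
by rewrite gt_eqF // nrm_gt0.
Qed.

Lemma s_unit k : st k.+1 != 0 -> ip (sv k.+1) (sv k.+1) = 1.
Proof.
move=> nz; rewrite sS /normalize ipZl ipZr mulrA -expr2 exprVn.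
rewrite /nrmw sqr_sqrtr ?ip_ge0 // mulVf // gt_eqF // ip_gt0 //.
Qed.

Lemma rr_decomp k : ON k -> st k.+1 != 0 ->
  rr k = nrmw A Sigma0 (st k.+1) *: sv k.+1 + ip (sv k) (rr k) *: sv k.
Proof. by move=> H nz; rewrite -st_eq // st_rr // subrK. Qed.

Section Main.
Variable m : nat.
Hypothesis Hst : forall i : nat, (1 <= i <= m)%N -> st i != 0.

Lemma stS k : (k < m)%N -> st k.+1 != 0.
Proof. by move=> km; apply: Hst. Qed.

Lemma rr_orth k i : ON k -> (k <= m)%N -> (i < k)%N -> dot (rr i) (rr k) = 0.
Proof.
move=> H km ik; have Hi : ON i by apply: ON_le H; apply: ltnW.
rewrite (rr_decomp Hi) ?stS //; last by apply: leq_trans km.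
by rewrite dotDl !dotZl !Q // ?mulr0 ?addr0 // ltnW.
Qed.

Lemma c_neq0 k j : ON k -> (k <= m)%N -> (j < k)%N -> dot (sv j.+1) (r0 A b x0) != 0.
Proof.
move=> H km jk; have Hj : ON j by apply: ON_le H; apply: ltnW.
have nz : st j.+1 != 0 by apply: stS; apply: leq_trans km.
rewrite -(@Qprev k j H) //; move: (nz); apply: contra => /eqP c0.
have E : dot (rr j) (rr j) = 0.
  by rewrite {1}(rr_decomp Hj) // dotDl !dotZl c0 Q // mulr0 mulr0 addr0.
have rj0 := dot_eq0 E.
by rewrite st_rr // rj0 ip0r scale0r subr0.
Qed.

Lemma key k j : ON k -> (k <= m)%N -> (1 <= j)%N -> (j < k)%N -> ip (sv j) (rr k) = 0.
Proof.
move=> H km; case: j => // j _ jk.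
have cnz := c_neq0 H km (ltnW jk).
apply/eqP; rewrite -(mulrI_eq0 _ (lregP cnz)); apply/eqP.
rewrite ipE' -dotZl.
have -> : dot (sv j.+1) (r0 A b x0) *: (M *m sv j.+1) = rr j - rr j.+1.
  by rewrite /= opprB addrC subrK.
by rewrite dotBl !(rr_orth H) // ?subr0 // ltnW.
Qed.

Lemma ON_step k : (k < m)%N -> ON k -> ON k.+1.
Proof.
move=> km H.
have nz := stS km.
have orth j : (1 <= j <= k)%N -> ip (sv j) (sv k.+1) = 0.
  case/andP=> j1 jk.
  rewrite [sv k.+1]sS /normalize ipZr; apply/eqP; rewrite mulf_eq0; apply/orP; right.
  rewrite st_rr // ipBr ipZr; apply/eqP.
  move: jk; rewrite leq_eqVlt => /orP[/eqP Ejk|jk].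
    rewrite Ejk in j1; rewrite Ejk (H k k) ?j1 ?leqnn //.
    by rewrite eqxx mulr1 subrr.
  rewrite (H j k) ?j1 ?(ltnW jk) ?(leq_trans j1 (ltnW jk)) ?leqnn //.
  rewrite (ltn_eqF jk) mulr0 subr0 (key H) //; exact: ltnW.
move=> i j /andP[i1 ik] /andP[j1 jk].
move: ik; rewrite leq_eqVlt ltnS => /orP[/eqP->|ik];
  move: jk; rewrite leq_eqVlt ltnS => /orP[/eqP->|jk].
- by rewrite s_unit // eqxx.
- by rewrite ipC orth ?j1 // gtn_eqF.
- by rewrite orth ?i1 // ltn_eqF.
- by rewrite H ?i1 ?j1.
Qed.

Lemma ON_all k : (k <= m)%N -> ON k.
Proof.
elim: k => [|k IH] km; first by move=> i j /andP[i1 i0]; case: i i1 i0.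
by apply: ON_step => //; apply: IH; apply: ltnW.
Qed.
End Main.
End Proof7.

Theorem proposition7 (R : realType) (d : nat) (A Sigma0 : 'M[R]_d)
    (b x0 : 'cV[R]_d) :
  A \in unitmx ->
  Sigma0^T = Sigma0 ->
  (forall v : 'cV[R]_d, v != 0 -> 0 < (v^T *m Sigma0 *m v) 0 0) ->
  forall m : nat,
    (forall i : nat, (1 <= i <= m)%N -> stilde A Sigma0 b x0 i != 0) ->
    (forall i j : nat, (1 <= i <= m)%N -> (1 <= j <= m)%N ->
       ipw A Sigma0 (s A Sigma0 b x0 i) (s A Sigma0 b x0 j) = (i == j)%:R)
    /\ Lam A Sigma0 m (sseq A Sigma0 b x0 m) = 1%:M.
Proof.
move=> HA HS Hpos m Hst.
have H := ON_all HA HS Hpos Hst (leqnn m).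
split; first exact: H.
exact: Lam1 H.
Qed.
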